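(* Let $n,m_1,m_2$ be nonnegative integers. Let $B_1(m_1,m_2,n)$ be the number of partitions of $n$ into parts congruent to $0,2,3,$ or $4\pmod 6$ having exactly $m_1$ parts congruent to $2\pmod 6$ and exactly $m_2$ parts congruent to $4\pmod 6$. Let $B_2(m_1,m_2,n)$ be the number of partitions of $n$ in which no two consecutive integers both appear as parts and all parts are at least $2$, having exactly $m_2$ parts congruent to $1\pmod 3$ and exactly $m_1$ parts congruent to $2\pmod 3$. Then $B_1(m_1,m_2,n)=B_2(m_1,m_2,n)$. Equivalently, if $\Lambda$ denotes the set of partitions with no part equal to $1$ in which no two consecutive integers both appear as parts, and $\#_{1,3}(\lambda)$, $\#_{2,3}(\lambda)$ denote the numbers of parts of $\lambda$ congruent to $1$ and $2\pmod 3$ respectively (counted with multiplicity), then as formal power series $$\sum_{\lambda\in\Lambda}A^{\#_{2,3}(\lambda)}C^{\#_{1,3}(\lambda)}q^{|\lambda|}=\frac{1}{(q^3;q^3)_\infty\,(Aq^2;q^6)_\infty\,(Cq^4;q^6)_\infty}.$$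
   Context: $|\lambda|$ is the sum of the parts of $\lambda$. Standard $q$-Pochhammer notation: $(a;q)_\infty=\prod_{j\ge0}(1-aq^j)$. Numbers of parts in a given residue class are counted with multiplicity. *)

(* Defs.v *)
From mathcomp Require Import all_boot.
Set Implicit Arguments. Unset Strict Implicit. Unset Printing Implicit Defensive.

(* A partition of n is encoded by its multiplicity function
   mu : {ffun 'I_n.+1 -> 'I_n.+1}, where mu i = number of parts equal to i.
   Every part of a partition of n is <= n and occurs at most n times, so this
   encoding is a bijection onto partitions of n once we require
   mu 0 = 0 and  \sum_i i * mu i = n. *)
Definition mult_fun (n : nat) := {ffun 'I_n.+1 -> 'I_n.+1}.

Definition is_partition n (mu : mult_fun n) : bool :=
  (mu ord0 == 0 :> nat) && (\sum_(i < n.+1) i * mu i == n).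

Definition nparts_mod n (mu : mult_fun n) (d r : nat) : nat :=
  \sum_(i < n.+1 | i %% d == r) mu i.

Definition B1_pred (m1 m2 n : nat) (mu : mult_fun n) : bool :=
  [&& is_partition mu,
      [forall i : 'I_n.+1, (0 < mu i) ==> (i %% 6 \in [:: 0; 2; 3; 4])],
      nparts_mod mu 6 2 == m1 &
      nparts_mod mu 6 4 == m2].

Definition B1 (m1 m2 n : nat) : nat := #|[set mu : mult_fun n | B1_pred m1 m2 mu]|.

Definition B2_pred (m1 m2 n : nat) (mu : mult_fun n) : bool :=
  [&& is_partition mu,
      [forall i : 'I_n.+1, (0 < mu i) ==> (2 <= i)],
      [forall i : 'I_n.+1, forall j : 'I_n.+1,
          ((j : nat) == i.+1) ==> ((mu i == 0 :> nat) || (mu j == 0 :> nat))],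
      nparts_mod mu 3 1 == m2 &
      nparts_mod mu 3 2 == m1].

Definition B2 (m1 m2 n : nat) : nat := #|[set mu : mult_fun n | B2_pred m1 m2 mu]|.

(* Main.v *)
Require Import Defs.
From mathcomp Require Import all_boot zify.
Set Implicit Arguments. Unset Strict Implicit. Unset Printing Implicit Defensive.


Lemma sum_eq_pick m (x : nat) (F : nat -> nat) :
  \sum_(j < m.+1) (x == j :> nat) * F j = (x <= m) * F x.
Proof.
elim: m => [|m IH]; first by rewrite big_ord1; case: x.
rewrite big_ord_recr /= IH.
case: (eqVneq x m.+1) => [->|Hne]; first by rewrite ltnn leqnn /= mul0n add0n mul1n.
rewrite mul0n addn0. have -> : (x <= m.+1) = (x <= m) by lia. by [].
Qed.

Lemma cnt_le m v : \sum_(p < m.+1) ((0 < p) && (p <= v)) = minn v m.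
Proof.
elim: m => [|m IH]; first by rewrite big_ord1 /=; lia.
rewrite big_ord_recr /= IH. case: (leqP m.+1 v) => H; lia.
Qed.

Lemma step_down (g : nat -> nat) (gmono : forall p q, p <= q -> g q <= g p) v a b :
  a <= b -> g a = v.+1 -> g b = v -> exists k, [/\ a <= k, k < b, g k = v.+1 & g k.+1 = v].
Proof.
elim: b a => [|b IH] a Hab Ha Hb.
- have E : a = 0 by lia. subst a. lia.
- case: (eqVneq a b.+1) => [E|Ne]. subst a. lia.
  have Hab' : a <= b by lia.
  case: (eqVneq (g b) v) => [E|Ne2].
  + have [k [H1 H2 H3 H4]] := IH a Hab' Ha E. exists k. split => //. lia.
  + exists b. have := gmono _ _ Hab'. have := gmono b b.+1 (leqnSn b). move: Ne2 => /eqP Ne2. split; lia.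
Qed.

Section Conj.
Variable n : nat.
Definition Nf (f : nat -> nat) (p : nat) : nat := \sum_(q < n.+1) (p <= q) * f q.
Definition conjf (f : nat -> nat) (i : nat) : nat :=
  (0 < i) * \sum_(p < n.+1) ((0 < p) && (Nf f p == i)).
Definition sz (f : nat -> nat) := \sum_(i < n.+1) i * f i.

Lemma Nf_mono f p q : p <= q -> Nf f q <= Nf f p.
Proof. move=> H; apply: leq_sum => i _; apply: leq_mul => //. case: (q <= i) / idP => //= Hq. have -> : p <= i by lia. by []. Qed.

Lemma Nf_big f p : n < p -> Nf f p = 0.
Proof. move=> H; apply: big1 => i _. have -> : (p <= i) = false by have := ltn_ord i; lia. by []. Qed.

Lemma Nf_S f p : p <= n -> Nf f p = f p + Nf f p.+1.
Proof.
move=> H. have E := sum_eq_pick n p f. rewrite H mul1n in E. rewrite /Nf -[f p]E -big_split /=.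
apply: eq_bigr => i _. case: (ltngtP p i) => Hi; lia.
Qed.

Lemma abel f : sz f = \sum_(p < n.+1) (0 < p) * Nf f p.
Proof.
rewrite /sz /Nf. symmetry. under eq_bigr => p _ do rewrite big_distrr /=.
rewrite exchange_big /=. apply: eq_bigr => q _.
under eq_bigr => p _ do rewrite mulnA mulnb.
rewrite -big_distrl /= cnt_le. have := ltn_ord q. move=> Hq. congr (_ * _). lia.
Qed.

Section G.
Variable g : nat -> nat.
Hypothesis gmono : forall p q, p <= q -> g q <= g p.
Hypothesis gbig : forall p, n < p -> g p = 0.

Lemma galois k i : 0 < k -> 0 < i ->
  (k <= \sum_(p < n.+1) ((0 < p) && (i <= g p))) = (i <= g k).
Proof.
move=> Hk Hi. case: (leqP i (g k)) => H.
- have Hkn : k <= n. { case: (leqP k n) => // /gbig E. lia. }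
  have S : \sum_(p<n.+1) ((0<p)&&(p<=k)) <= \sum_(p<n.+1) ((0<p)&&(i <= g p)).
  { apply: leq_sum => p _. case: (0 < p) => //=. case: (leqP p k) => //= Hp.
    by rewrite (leq_trans H (gmono Hp)). }
  rewrite cnt_le in S. apply/idP. lia.
- have S : \sum_(p<n.+1) ((0<p)&&(i <= g p)) <= \sum_(p<n.+1) ((0<p)&&(p<=k.-1)).
  { apply: leq_sum => p _. case: (0 < p) => //=. case: (leqP i (g p)) => //= Hp.
    case: (leqP p k.-1) => // Hp2. have : k <= p by lia. move/gmono. lia. }
  rewrite cnt_le in S. apply/negbTE. lia.
Qed.
End G.

Lemma b4 (a b c d : bool) : a * (b * (c && d)) = d * (c * a * b).
Proof. by case: a; case: b; case: c; case: d. Qed.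

Lemma Nf_le f p : Nf f 1 <= n -> 0 < p -> Nf f p <= n.
Proof. move=> HN Hp. exact: leq_trans (Nf_mono f Hp) HN. Qed.

Lemma Nf_conj f i : Nf f 1 <= n -> 0 < i ->
  Nf (conjf f) i = \sum_(p<n.+1) ((0<p) && (i <= Nf f p)).
Proof.
move=> HN Hi. rewrite {1}/Nf /conjf.
under eq_bigr => j _ do rewrite big_distrr big_distrr /=.
rewrite exchange_big /=. apply: eq_bigr => p _.
under eq_bigr => j _ do rewrite b4.
rewrite (sum_eq_pick n (Nf f p) (fun j => (0 < p) * (i <= j) * (0 < j))). case: p => p Hp /=.
case: (posnP p) => [->|Pp] /=; first by rewrite !muln0.
rewrite (Nf_le HN Pp) mul1n mul1n. case: (leqP i (Nf f p)) => H /=; last by rewrite mul0n.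
have -> : 0 < Nf f p by lia. by [].
Qed.

Lemma sum_H f k : Nf f 1 <= n -> 0 < k ->
  \sum_(i<n.+1) ((0<i) && (k <= \sum_(p<n.+1) ((0<p) && (i <= Nf f p)))) = Nf f k.
Proof.
move=> HN Hk.
have E : forall i : 'I_n.+1, ((0<i) && (k <= \sum_(p<n.+1) ((0<p) && (i <= Nf f p)))) = ((0 < i) && (i <= Nf f k)).
{ move=> i. case: (posnP i) => [->|Pi] //=. by rewrite (galois (@Nf_mono f) (@Nf_big f)). }
under eq_bigr => i _ do rewrite E. rewrite cnt_le.
case: (leqP k n) => Hkn. have := Nf_le HN Hk. lia. rewrite Nf_big //. lia.
Qed.

Lemma conj_inv f k : Nf f 1 <= n -> 0 < k -> k <= n -> conjf (conjf f) k = f k.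
Proof.
move=> HN Hk Hkn. rewrite /conjf Hk mul1n -/(conjf f).
set H := fun i => \sum_(p<n.+1) ((0<p) && (i <= Nf f p)).
have E1 : forall i : 'I_n.+1, ((0<i) && (Nf (conjf f) i == k)) = ((0<i) && (H i == k)).
{ move=> i. case: (posnP i) => [->|Pi] //=. by rewrite Nf_conj. }
under eq_bigr => i _ do rewrite E1.
have E2 : \sum_(i<n.+1) ((0<i) && (H i == k)) + \sum_(i<n.+1) ((0<i) && (k.+1 <= H i))
   = \sum_(i<n.+1) ((0<i) && (k <= H i)).
{ rewrite -big_split /=. apply: eq_bigr => i _. case: (0 < i) => //=. case: (ltngtP (H i) k) => //=. }
move: E2. rewrite /H !sum_H // (Nf_S f Hkn). by move/addIn.
Qed.

Lemma sz_conj f : Nf f 1 <= n -> sz (conjf f) = sz f.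
Proof.
move=> HN. rewrite abel [RHS]abel.
have E : forall i : 'I_n.+1, (0 < i) * Nf (conjf f) i = \sum_(p<n.+1) ((0<i) && ((0<p) && (i <= Nf f p))).
{ move=> i. case: (posnP i) => [->|Pi]; first by rewrite mul0n big1.
  rewrite mul1n Nf_conj //. }
under eq_bigr => i _ do rewrite E.
rewrite exchange_big /=. apply: eq_bigr => p _.
have E' : forall i : 'I_n.+1, (((0<i) && ((0<p) && (i <= Nf f p))) : nat) = (0 < p) * ((0 < i) && (i <= Nf f p)).
{ move=> i. by case: (0 < i); case: (0 < p); rewrite ?mul1n ?mul0n. }
under eq_bigr => i _ do rewrite E'.
rewrite -big_distrr /= cnt_le. clear E'. case: p => p Hp /=. case: (posnP p) => [->|Pp] //.
rewrite ?mul1n. have := Nf_le HN Pp. lia.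
Qed.

Lemma b4' (a b c d : bool) : a * (b * (c && d)) = d * (a * b * c).
Proof. by case: a; case: b; case: c; case: d. Qed.

Lemma wt_conj f (P : pred nat) : Nf f 1 <= n -> P 0 = false ->
  \sum_(i < n.+1 | P i) conjf f i = \sum_(p < n.+1) ((0 < p) && P (Nf f p)).
Proof.
move=> HN P0. rewrite big_mkcond /=.
have E : forall i : 'I_n.+1, (if P i then conjf f i else 0) = P i * conjf f i.
{ move=> i. by case: (P i); rewrite ?mul1n ?mul0n. }
under eq_bigr => i _ do rewrite E /conjf big_distrr big_distrr /=.
rewrite exchange_big /=. apply: eq_bigr => p _.
under eq_bigr => j _ do rewrite b4'.
rewrite (sum_eq_pick n (Nf f p) (fun j => P j * (0 < j) * (0 < p))).
case: p => p Hp /=. case: (posnP p) => [->|Pp] /=; first by rewrite !muln0.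
rewrite (Nf_le HN Pp) mul1n muln1. case: (posnP (Nf f p)) => [->|H0]; first by rewrite P0.
by rewrite muln1.
Qed.

Lemma conjf_le f i : conjf f i <= n.
Proof.
rewrite /conjf. case: (0 < i); rewrite ?mul0n ?mul1n //.
have S : \sum_(p<n.+1) ((0<p) && (Nf f p == i)) <= \sum_(p<n.+1) ((0<p) && (p <= n)).
- apply: leq_sum => p _. case: (0 < p) => /=; last by []. have := ltn_ord p. rewrite ltnS => ->. exact: leq_b1.
- rewrite cnt_le in S. lia.
Qed.

Lemma conjf0 f : conjf f 0 = 0.
Proof. by rewrite /conjf mul0n. Qed.

Lemma sum_pos (F : 'I_n.+1 -> bool) : (0 < \sum_(i<n.+1) F i) = [exists i, F i].
Proof.
apply/idP/existsP.
- move=> H. apply/existsP. apply: contraTT H => /existsPn H. rewrite -leqNgt leqn0.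
  apply/eqP/big1 => i _. by rewrite (negbTE (H i)).
- case=> i Hi. rewrite (bigD1 i) //= Hi. by [].
Qed.

Lemma conjf_pos f p : (0 < conjf f p) = (0 < p) && [exists q : 'I_n.+1, (0 < q) && (Nf f q == p)].
Proof. rewrite /conjf. case: (0 < p); rewrite ?mul0n ?mul1n //. by rewrite sum_pos. Qed.

Lemma Nf_S' f p : Nf f p = (p <= n) * f p + Nf f p.+1.
Proof. case: (leqP p n) => H. by rewrite Nf_S // mul1n. by rewrite !Nf_big //; lia. Qed.


Lemma conjf_pos_le f p : Nf f 1 <= n -> 0 < conjf f p -> p <= n.
Proof.
move=> HN. rewrite conjf_pos => /andP [_ /existsP [q /andP [Hq /eqP E]]]. rewrite -E. exact: Nf_le.
Qed.

Lemma one_iff f : Nf f 1 <= n ->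
 (exists2 k, 0 < k <= n & f k = 1) <->
 (0 < conjf f 1 \/ exists p, [/\ 0 < p, 0 < conjf f p & 0 < conjf f p.+1]).
Proof.
move=> HN. have mono := @Nf_mono f. split.
- case=> k /andP [Hk Hkn] Hf. have E := Nf_S f Hkn. rewrite Hf in E.
  case: (posnP (Nf f k.+1)) => [Z|P].
  + left. rewrite conjf_pos /=. apply/existsP. exists (Ordinal (n:=n.+1) (m:=k) ltac:(lia)). rewrite /= Hk /=. apply/eqP. lia.
  + right. exists (Nf f k.+1). have Hk1 : k.+1 <= n. { case: (leqP k.+1 n) => // /(Nf_big f). lia. }
    split => //; rewrite conjf_pos ?P /=; apply/existsP.
    * exists (Ordinal (n:=n.+1) (m:=k.+1) ltac:(lia)). by rewrite /= eqxx.
    * exists (Ordinal (n:=n.+1) (m:=k) ltac:(lia)). rewrite /= Hk /=. apply/eqP. lia.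
- case.
  + rewrite conjf_pos /= => /existsP [q /andP [Hq /eqP Hq1]].
    have [k [H1 H2 H3 H4]] := step_down mono (a:=q) (b:=n.+1) (v:=0) ltac:(have := ltn_ord q; lia) Hq1 (Nf_big f (leqnn _)).
    exists k. lia. have Hkn : k <= n by lia. have := Nf_S f Hkn. lia.
  + case=> p [Pp]. rewrite !conjf_pos Pp /= => /existsP [q2 /andP [Hq2 /eqP E2]] /existsP [q1 /andP [Hq1 /eqP E1]].
    have Hle : (q1 : nat) <= q2. { case: (leqP (q1 : nat) q2) => // H. have := mono _ _ (ltnW H). lia. }
    have [k [H1 H2 H3 H4]] := step_down mono Hle E1 E2.
    have Hkn : k <= n by have := ltn_ord q2; lia.
    exists k. lia. have := Nf_S f Hkn. lia.
Qed.
End Conj.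

Section Extra.
Variable n : nat.
Lemma Nf1_sz (f : nat -> nat) : Nf n f 1 <= sz n f.
Proof. apply: leq_sum => i _. apply: leq_mul => //. by case: (nat_of_ord i). Qed.

Lemma le_sz (f : nat -> nat) (i : 'I_n.+1) : 0 < i -> f i <= sz n f.
Proof. move=> Hi. rewrite /sz (bigD1 i) //=. apply: leq_trans (leq_addr _ _). by rewrite leq_pmull. Qed.

Definition agree (f g : nat -> nat) := forall i : 'I_n.+1, f i = g i.

Lemma Nf_agree f g p : agree f g -> Nf n f p = Nf n g p.
Proof. move=> H. apply: eq_bigr => i _. by rewrite H. Qed.
Lemma sz_agree f g : agree f g -> sz n f = sz n g.
Proof. move=> H. apply: eq_bigr => i _. by rewrite H. Qed.
Lemma conjf_agree f g i : agree f g -> conjf n f i = conjf n g i.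
Proof. move=> H. rewrite /conjf. congr (_ * _). apply: eq_bigr => p _. by rewrite (Nf_agree _ H). Qed.
End Extra.


Section MF.
Variable n : nat.
Definition vo (m : mult_fun n) (k : nat) : nat := if k < n.+1 then nat_of_ord (m (inord k)) else 0.
Definition mk (f : nat -> nat) : mult_fun n := [ffun i : 'I_n.+1 => inord (f i)].

Lemma vo_ord m (i : 'I_n.+1) : vo m i = m i.
Proof. by rewrite /vo ltn_ord inord_val. Qed.
Lemma vo_big m k : n < k -> vo m k = 0.
Proof. move=> H. rewrite /vo. have -> : (k < n.+1) = false by lia. by []. Qed.
Lemma vo_le m k : vo m k <= n.
Proof. rewrite /vo. case: ltnP => // _. by rewrite -ltnS. Qed.
Lemma vo_mk (f : nat -> nat) k : k <= n -> f k <= n -> vo (mk f) k = f k.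
Proof. move=> Hk Hf. rewrite /vo. have -> : k < n.+1 by lia. rewrite ffunE /= (@inordK n k); last lia. rewrite inordK //; lia. Qed.
Lemma mf_eq a b : (forall i : 'I_n.+1, vo a i = vo b i) -> a = b.
Proof. move=> H. apply/ffunP => i. apply: val_inj. by rewrite /= -!vo_ord H. Qed.
Lemma vo_mk_agree (f : nat -> nat) : (forall i : 'I_n.+1, f i <= n) -> agree n (vo (mk f)) f.
Proof. move=> H i. rewrite vo_mk //. by rewrite -ltnS. Qed.

Definition cj (m : mult_fun n) : mult_fun n := mk (conjf n (vo m)).

Lemma cj_agree m : agree n (vo (cj m)) (conjf n (vo m)).
Proof. apply: vo_mk_agree => i. exact: conjf_le. Qed.

Lemma cj0 m : vo (cj m) 0 = 0.
Proof. by rewrite (cj_agree m ord0) conjf0. Qed.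

Lemma sz_cj m : sz n (vo m) <= n -> sz n (vo (cj m)) = sz n (vo m).
Proof. move=> H. rewrite (sz_agree (cj_agree m)) sz_conj //. exact: leq_trans (Nf1_sz _ _) H. Qed.

Lemma cj_cj m : vo m 0 = 0 -> sz n (vo m) <= n -> cj (cj m) = m.
Proof.
move=> H0 Hs. apply: mf_eq => i. rewrite (cj_agree (cj m) i) (conjf_agree _ (cj_agree m)).
case: (posnP i) => [->|Pi]; first by rewrite conjf0.
rewrite conj_inv //. exact: leq_trans (Nf1_sz _ _) Hs. rewrite -ltnS. exact: ltn_ord.
Qed.

Lemma wt_cj m (P : pred nat) : sz n (vo m) <= n -> P 0 = false ->
  \sum_(i < n.+1 | P i) vo (cj m) i = \sum_(p < n.+1) ((0 < p) && P (Nf n (vo m) p)).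
Proof.
move=> Hs P0. rewrite -wt_conj //; last exact: leq_trans (Nf1_sz _ _) Hs.
apply: eq_bigr => i _. exact: cj_agree.
Qed.

Lemma nparts_vo m d r : nparts_mod m d r = \sum_(i < n.+1 | i %% d == r) vo m i.
Proof. apply: eq_bigr => i _. by rewrite vo_ord. Qed.

Lemma ispart_vo m : is_partition m = (vo m 0 == 0) && (sz n (vo m) == n).
Proof.
rewrite /is_partition. congr (_ && _).
- by rewrite -(vo_ord m ord0).
- congr (_ == _). apply: eq_bigr => i _. by rewrite vo_ord.
Qed.

End MF.

Lemma card_bij (T U : finType) (A : {set T}) (B : {set U}) (f : T -> U) (g : U -> T) :
  (forall x, x \in A -> f x \in B) -> (forall y, y \in B -> g y \in A) ->
  (forall x, x \in A -> g (f x) = x) -> (forall y, y \in B -> f (g y) = y) ->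
  #|A| = #|B|.
Proof.
move=> fA gB gf fg. apply/eqP. rewrite eqn_leq. apply/andP; split.
- rewrite -(card_in_imset (f := f)); last by move=> x y Hx Hy E; rewrite -(gf x Hx) -(gf y Hy) E.
  apply: subset_leq_card. apply/subsetP => y /imsetP [x Hx ->]. exact: fA.
- rewrite -(card_in_imset (f := g)); last by move=> x y Hx Hy E; rewrite -(fg x Hx) -(fg y Hy) E.
  apply: subset_leq_card. apply/subsetP => y /imsetP [x Hx ->]. exact: gB.
Qed.


Section A.
Variable n : nat.

Lemma noone_iff (mu : mult_fun n) : vo mu 0 = 0 -> sz n (vo mu) <= n ->
  ([forall i, (0 < cj mu i) ==> (2 <= i)] &&
   [forall i : 'I_n.+1, forall j : 'I_n.+1,
          ((j : nat) == i.+1) ==> ((cj mu i == 0 :> nat) || (cj mu j == 0 :> nat))])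
  = [forall i : 'I_n.+1, (mu i != 1 :> nat)].
Proof.
move=> H0 Hs. set f := vo mu.
have HN : Nf n f 1 <= n by exact: leq_trans (Nf1_sz _ _) Hs.
have L : forall i : 'I_n.+1, (cj mu i : nat) = conjf n f i.
{ move=> i. by rewrite -vo_ord cj_agree. }
have OI := one_iff HN.
apply/idP/idP.
- move=> /andP [/forallP F1 /forallP F2]. apply/forallP => i. apply/negP => /eqP Hi.
  have Hi0 : 0 < i. { case: (posnP i) => // E. move: H0. rewrite /f -(vo_ord mu i) E in Hi. rewrite /f. lia. }
  have : exists2 k, 0 < k <= n & f k = 1.
  { exists i. have := ltn_ord i. lia. by rewrite /f vo_ord. }
  move/OI. case.
  + move=> P1. have Hn1 : 1 <= n by have := conjf_pos_le HN P1; lia.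
    have := F1 (Ordinal (n:=n.+1) (m:=1) ltac:(lia)). rewrite L /= P1. by [].
  + case=> p [Pp Q1 Q2]. have Hp1 := conjf_pos_le HN Q2.
    have F2' := F2 (Ordinal (n:=n.+1) (m:=p) ltac:(lia)). move/forallP in F2'.
    have := F2' (Ordinal (n:=n.+1) (m:=p.+1) ltac:(lia)).
    rewrite /= eqxx /= !L /=. lia.
- move=> /forallP F. apply/andP; split.
  + apply/forallP => i. apply/implyP. rewrite L => Hpos.
    case: (leqP 2 i) => // Hi2.
    have Hi1 : (i : nat) = 1. { case: (posnP i) => [E|]; last lia. move: Hpos. by rewrite E conjf0. }
    rewrite Hi1 in Hpos. have [k Hk Hfk] := proj2 OI (or_introl Hpos).
    have := F (Ordinal (n:=n.+1) (m:=k) ltac:(lia)). by rewrite -vo_ord /= -/f Hfk.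
  + apply/forallP => i. apply/forallP => j. apply/implyP => /eqP Hj.
    rewrite !L. case: (posnP (conjf n f i)) => //= Pi. case: (posnP (conjf n f j)) => //= Pj.
    have Hi0 : 0 < i. { case: (posnP i) => // E. move: Pi. by rewrite E conjf0. }
    rewrite Hj in Pj.
    have [k Hk Hfk] := proj2 OI (or_intror (ex_intro _ (nat_of_ord i) (And3 Hi0 Pi Pj))).
    have := F (Ordinal (n:=n.+1) (m:=k) ltac:(lia)). by rewrite -vo_ord /= -/f Hfk.
Qed.
End A.

Section A2.
Variables n m1 m2 : nat.
Definition wN (mu : mult_fun n) r := \sum_(p<n.+1) ((0<p) && (Nf n (vo mu) p %% 3 == r)).
Definition MuSet := [set mu : mult_fun n | [&& vo mu 0 == 0, sz n (vo mu) == n,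
   [forall i, (mu i != 1 :> nat)], wN mu 1 == m2 & wN mu 2 == m1]].

Lemma wN_cj (mu : mult_fun n) r : 0 < r -> sz n (vo mu) <= n ->
  nparts_mod (cj mu) 3 r = wN mu r.
Proof.
move=> Hr Hs. rewrite nparts_vo (wt_cj (P := fun i => i %% 3 == r)) //=. lia.
Qed.

Lemma B2_Mu : B2 m1 m2 n = #|MuSet|.
Proof.
apply: (card_bij (f := @cj n) (g := @cj n)).
- move=> l. rewrite inE => /and5P [Hp Hf1 Hf2 Hw2 Hw1]. rewrite ispart_vo in Hp.
  case/andP: Hp => /eqP H0 /eqP Hs.
  set mu := cj l. have Hs' : sz n (vo mu) = n by rewrite sz_cj Hs.
  have E : cj mu = l by rewrite cj_cj // Hs.
  rewrite -E in Hf1 Hf2 Hw2 Hw1. rewrite !wN_cj // ?Hs' // in Hw2 Hw1.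
  rewrite inE cj0 Hs' !eqxx Hw2 Hw1 /= !andbT -noone_iff ?Hf1 ?Hf2 // ?Hs' ?cj0 //.
- move=> mu. rewrite /MuSet inE => /and5P [/eqP H0 /eqP Hs Hf Hw2 Hw1].
  have Hs' : sz n (vo (cj mu)) = n by rewrite sz_cj Hs.
  rewrite inE /B2_pred ispart_vo cj0 Hs' !eqxx !wN_cj ?Hs // Hw2 Hw1 !andbT /=.
  by rewrite noone_iff ?Hs.
- move=> l. rewrite inE => /and5P [Hp _ _ _ _]. rewrite ispart_vo in Hp.
  case/andP: Hp => /eqP H0 /eqP Hs. by rewrite cj_cj ?Hs.
- move=> mu. rewrite /MuSet inE => /and5P [/eqP H0 /eqP Hs _ _ _]. by rewrite cj_cj ?Hs.
Qed.
End A2.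


Section B.
Variables n m1 m2 : nat.

Lemma sz_lin (f g : nat -> nat) a b : sz n (fun i => a * f i + b * g i) = a * sz n f + b * sz n g.
Proof. rewrite /sz !big_distrr -big_split /=. apply: eq_bigr => i _. lia. Qed.
Lemma Nf_lin (f g : nat -> nat) a b p : Nf n (fun i => a * f i + b * g i) p = a * Nf n f p + b * Nf n g p.
Proof. rewrite /Nf !big_distrr -big_split /=. apply: eq_bigr => i _. lia. Qed.

Definition PairSet' := [set x : mult_fun n * mult_fun n | [&& (vo x.1 0 == 0) && (vo x.2 0 == 0),
   [forall i, (nat_of_ord (x.2 i) <= 1)], 2 * sz n (vo x.1) + 3 * sz n (vo x.2) == n,
   wN x.1 2 == m2 & wN x.1 1 == m1]].

Definition hlf (v : nat) := (v - 3 * (v %% 2)) %/ 2.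
Definition splt (mu : mult_fun n) : mult_fun n * mult_fun n :=
  (mk n (fun i => hlf (vo mu i)), mk n (fun i => vo mu i %% 2)).
Definition mrg (x : mult_fun n * mult_fun n) : mult_fun n :=
  mk n (fun i => 2 * vo x.1 i + 3 * vo x.2 i).

Lemma hlf_le v : hlf v <= v. Proof. rewrite /hlf. lia. Qed.

Lemma splt1 mu : agree n (vo (splt mu).1) (fun i => hlf (vo mu i)).
Proof. apply: vo_mk_agree => i. exact: leq_trans (hlf_le _) (vo_le _ _). Qed.
Lemma splt2 mu : agree n (vo (splt mu).2) (fun i => vo mu i %% 2).
Proof. apply: vo_mk_agree => i. exact: leq_trans (leq_mod _ _) (vo_le _ _). Qed.

Lemma mrg_agree x : vo x.1 0 = 0 -> vo x.2 0 = 0 -> 2 * sz n (vo x.1) + 3 * sz n (vo x.2) <= n ->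
  agree n (vo (mrg x)) (fun i => 2 * vo x.1 i + 3 * vo x.2 i).
Proof.
move=> H1 H2 Hs. apply: vo_mk_agree => i. case: (posnP i) => [->|Pi]; first by rewrite H1 H2.
have := le_sz (vo x.1) Pi. have := le_sz (vo x.2) Pi. lia.
Qed.

Lemma wN_lin (f g : mult_fun n) (mu : mult_fun n) r :
  agree n (vo mu) (fun i => 2 * vo f i + 3 * vo g i) ->
  wN mu r = \sum_(p<n.+1) ((0<p) && ((2 * Nf n (vo f) p) %% 3 == r)).
Proof.
move=> A. apply: eq_bigr => p _. rewrite (Nf_agree _ A) Nf_lin. congr (_ && (_ == _)). lia.
Qed.

Lemma res1 a : ((2 * a) %% 3 == 1) = (a %% 3 == 2). Proof. apply/eqP/eqP; lia. Qed.
Lemma res2 a : ((2 * a) %% 3 == 2) = (a %% 3 == 1). Proof. apply/eqP/eqP; lia. Qed.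

Lemma Mu_Pair' : #|MuSet n m1 m2| = #|PairSet'|.
Proof.
apply: (card_bij (f := splt) (g := mrg)).
- move=> mu. rewrite /MuSet inE => /and5P [/eqP H0 /eqP Hs /forallP Hf /eqP Hw2 /eqP Hw1].
  have E : mrg (splt mu) = mu.
  { apply: mf_eq => i. rewrite (mrg_agree (x := splt mu)).
    - rewrite splt1 splt2. have := Hf i. rewrite -vo_ord. move=> /eqP. rewrite /hlf. lia.
    - by rewrite (splt1 mu ord0) /= H0.
    - by rewrite (splt2 mu ord0) /= H0.
    - rewrite (sz_agree (splt1 mu)) (sz_agree (splt2 mu)) -sz_lin.
      apply: eq_leq. rewrite -[RHS]Hs. apply: sz_agree => j. have := Hf j. rewrite -vo_ord. move=> /eqP. rewrite /hlf. lia. }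
  have A : agree n (vo mu) (fun i => 2 * vo (splt mu).1 i + 3 * vo (splt mu).2 i).
  { move=> i. rewrite splt1 splt2. have := Hf i. rewrite -vo_ord. move=> /eqP. rewrite /hlf. lia. }
  rewrite /PairSet' inE. apply/and5P; split.
  + by rewrite (splt1 mu ord0) (splt2 mu ord0) /= H0.
  + apply/forallP => i. rewrite -vo_ord splt2. lia.
  + by rewrite -sz_lin -(sz_agree A) Hs.
  + apply/eqP. rewrite -Hw2 (wN_lin _ A). by under eq_bigr => p _ do rewrite res1.
  + apply/eqP. rewrite -Hw1 (wN_lin _ A). by under eq_bigr => p _ do rewrite res2.
- case=> nu D. rewrite /PairSet' inE /= => /and5P [/andP [/eqP H1 /eqP H2] /forallP HD /eqP Hs /eqP Hw2 /eqP Hw1].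
  have A := mrg_agree (x := (nu, D)) H1 H2 (eq_leq Hs).
  rewrite /MuSet inE. apply/and5P; split.
  + by rewrite (A ord0) /= H1 H2.
  + by rewrite (sz_agree A) sz_lin Hs.
  + apply/forallP => i. rewrite -vo_ord A /=. have := HD i. rewrite -vo_ord. lia.
  + apply/eqP. rewrite -Hw2 (wN_lin _ A) /=. by under eq_bigr => p _ do rewrite res1.
  + apply/eqP. rewrite -Hw1 (wN_lin _ A) /=. by under eq_bigr => p _ do rewrite res2.
- move=> mu. rewrite /MuSet inE => /and5P [/eqP H0 /eqP Hs /forallP Hf _ _].
  apply: mf_eq => i. rewrite (mrg_agree (x := splt mu)).
  + rewrite splt1 splt2. have := Hf i. rewrite -vo_ord. move=> /eqP. rewrite /hlf. lia.
  + by rewrite (splt1 mu ord0) /= H0.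
  + by rewrite (splt2 mu ord0) /= H0.
  + rewrite (sz_agree (splt1 mu)) (sz_agree (splt2 mu)) -sz_lin.
    apply: eq_leq. rewrite -[RHS]Hs. apply: sz_agree => i'. have := Hf i'. rewrite -vo_ord. move=> /eqP. rewrite /hlf. lia.
- case=> nu D. rewrite /PairSet' inE /= => /and5P [/andP [/eqP H1 /eqP H2] /forallP HD /eqP Hs _ _].
  have A := mrg_agree (x := (nu, D)) H1 H2 (eq_leq Hs).
  congr (_, _); apply: mf_eq => i.
  + rewrite splt1 A /= /hlf. have := HD i. rewrite -vo_ord. lia.
  + rewrite splt2 A /=. have := HD i. rewrite -vo_ord. lia.
Qed.
End B.

Section C.
Variables n m1 m2 : nat.
Definition PairSet := [set x : mult_fun n * mult_fun n | [&& (vo x.1 0 == 0) && (vo x.2 0 == 0),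
   [forall i, (nat_of_ord (x.2 i) <= 1)], 2 * sz n (vo x.1) + 3 * sz n (vo x.2) == n,
   nparts_mod x.1 3 1 == m1 & nparts_mod x.1 3 2 == m2]].

Definition cj1 (x : mult_fun n * mult_fun n) := (cj x.1, x.2).

Lemma Pair'_Pair : #|PairSet' n m1 m2| = #|PairSet|.
Proof.
apply: (card_bij (f := cj1) (g := cj1)).
- case=> nu D. rewrite /PairSet' inE /= => /and5P [/andP [/eqP H1 /eqP H2] HD /eqP Hs /eqP Hw2 /eqP Hw1].
  have Hsn : sz n (vo nu) <= n by lia.
  rewrite /PairSet inE /= cj0 H2 HD sz_cj // Hs !wN_cj // Hw1 Hw2 !eqxx. by [].
- case=> s D. rewrite /PairSet inE /= => /and5P [/andP [/eqP H1 /eqP H2] HD /eqP Hs /eqP Hw1 /eqP Hw2].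
  have Hsn : sz n (vo s) <= n by lia.
  have E : cj (cj s) = s by rewrite cj_cj.
  have Hsn' : sz n (vo (cj s)) <= n by rewrite sz_cj.
  rewrite -E in Hw1 Hw2. rewrite !wN_cj // in Hw1 Hw2.
  rewrite /PairSet' inE /= cj0 H2 HD sz_cj // Hs Hw1 Hw2 !eqxx. by [].
- case=> nu D. rewrite /PairSet' inE /= => /and5P [/andP [/eqP H1 /eqP H2] HD /eqP Hs _ _].
  rewrite /cj1 /= cj_cj //. lia.
- case=> s D. rewrite /PairSet inE /= => /and5P [/andP [/eqP H1 /eqP H2] HD /eqP Hs _ _].
  rewrite /cj1 /= cj_cj //. lia.
Qed.
End C.


Section D.
Variable n : nat.

Lemma reindex k (F : nat -> nat) : 0 < k ->
  \sum_(x < n.+1) (k %| x) * F x = \sum_(j < n.+1) (k * j <= n) * F (k * j).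
Proof.
move=> Hk.
have E1 : forall x : 'I_n.+1, (k %| x) * F x = \sum_(j < n.+1) (k * j == x :> nat) * F (k * j).
{ move=> x. have -> : \sum_(j < n.+1) (k * j == x :> nat) * F (k * j) = \sum_(j < n.+1) (x %/ k == j :> nat) * ((k %| x) * F x).
  { apply: eq_bigr => j _. case: (eqVneq (k * j) x) => [E|Ne].
    - rewrite -E mulKn // eqxx dvdn_mulr //. by rewrite !mul1n.
    - case: (eqVneq (x %/ k) j) => [E|Ne2]; last by rewrite !mul0n.
      move: Ne; rewrite -E => Ne. have : ~~ (k %| x). { apply: contra Ne => /dvdnP [q ->]. by rewrite mulnK // mulnC. }
      move/negbTE => ->. by rewrite !muln0. }
  rewrite (sum_eq_pick n (x %/ k) (fun _ => (k %| x) * F x)).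
  have -> : x %/ k <= n. { have := ltn_ord x. have := leq_div x k. lia. } by rewrite mul1n. }
under eq_bigr => x _ do rewrite E1.
rewrite exchange_big /=. apply: eq_bigr => j _.
by rewrite (sum_eq_pick n (k * j) (fun _ => F (k * j))).
Qed.

Lemma mul_le_sz (f : nat -> nat) (i : 'I_n.+1) : i * f i <= sz n f.
Proof. rewrite /sz (bigD1 i) //=. exact: leq_addr. Qed.

Section M.
Variables s d : nat -> nat.
Hypothesis S1 : forall j, n < 2 * j -> s j = 0.
Hypothesis S2 : forall j, n < 3 * j -> d j = 0.
Definition MM t := if t %% 3 == 0 then 2 * s t + d (t %/ 3) else if t %% 2 == 0 then s (t %/ 2) else 0.

Lemma MM_big t : n < t -> MM t = 0.
Proof.
move=> H. rewrite /MM. case: ifP => H3.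
- rewrite S1; last lia. rewrite S2 //. have : 3 * (t %/ 3) = t by lia. lia.
- case: ifP => H2 //. apply: S1. lia.
Qed.

Lemma MM_sz : sz n MM = 2 * sz n s + 3 * sz n d.
Proof.
have E : forall t : 'I_n.+1, t * MM t = (3 %| t) * (2 * (t * s t)) + (3 %| t) * (t * d (t %/ 3))
   + (2 %| t) * ((~~ (3 %| t)) * (t * s (t %/ 2))).
{ move=> t. rewrite /MM. case: (eqVneq (t %% 3) 0) => H3.
  - have -> : 3 %| t by rewrite /dvdn H3. rewrite /=. lia.
  - have -> : (3 %| t) = false by rewrite /dvdn (negbTE H3). rewrite /=.
    case: (eqVneq (t %% 2) 0) => H2.
    + have -> : 2 %| t by rewrite /dvdn H2. rewrite /=. lia.
    + have -> : (2 %| t) = false by rewrite /dvdn (negbTE H2). rewrite /=. lia. }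
rewrite /sz. under eq_bigr => t _ do rewrite E. rewrite !big_split /=.
rewrite (reindex (fun t => t * d (t %/ 3))) // (reindex (fun t => (~~ (3 %| t)) * (t * s (t %/ 2)))) //.
have E2 : \sum_(j < n.+1) (3 * j <= n) * (3 * j * d (3 * j %/ 3)) = 3 * \sum_(j < n.+1) j * d j.
{ rewrite big_distrr /=. apply: eq_bigr => j _. rewrite mulKn //. case: (leqP (3 * j) n) => H. lia. rewrite S2 //. lia. }
have E3 : \sum_(j < n.+1) (2 * j <= n) * ((~~ (3 %| 2 * j)) * (2 * j * s (2 * j %/ 2))) = \sum_(j < n.+1) (~~ (3 %| j)) * (2 * (j * s j)).
{ apply: eq_bigr => j _. rewrite mulKn //. have -> : (3 %| 2 * j) = (3 %| j) by rewrite Euclid_dvdM.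
  case: (leqP (2 * j) n) => H. lia. rewrite S1 //. lia. }
rewrite E2 E3 -addnA [X in _ + X]addnC addnA -big_split /= big_distrr /=. congr (_ + _).
rewrite big_distrr /=. apply: eq_bigr => j _. by case: (3 %| j); rewrite /= ?mul1n ?mul0n ?addn0.
Qed.

Lemma MM_w r : (r == 1) || (r == 2) ->
  \sum_(t < n.+1 | t %% 6 == 2 * r) MM t = \sum_(j < n.+1 | j %% 3 == r) s j.
Proof.
move=> Hr. rewrite !big_mkcond /=.
have E : forall t : 'I_n.+1, (if t %% 6 == 2 * r then MM t else 0) = (2 %| t) * ((t %/ 2 %% 3 == r) * s (t %/ 2)).
{ move=> t. rewrite /MM /dvdn. case: ifP => A.
  - have -> : (t %% 3 == 0) = false by lia. have -> : t %% 2 == 0 by lia.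
    have -> : t %/ 2 %% 3 == r by lia. by rewrite !mul1n.
  - case: (eqVneq (t %% 2) 0) => B; last by rewrite mul0n.
    have -> : (t %/ 2 %% 3 == r) = false by lia. by rewrite mul0n muln0. }
under eq_bigr => t _ do rewrite E. rewrite (reindex (fun t => (t %/ 2 %% 3 == r) * s (t %/ 2))) //.
rewrite [RHS]big_mkcond. apply: eq_bigr => j _. rewrite mulKn //. case: (leqP (2 * j) n) => H.
- rewrite mul1n. by case: (j %% 3 == r); rewrite ?mul1n ?mul0n.
- rewrite S1 //. by case: (j %% 3 == r); rewrite ?muln0.
Qed.
End M.
End D.

Section E.
Variables n m1 m2 : nat.

Definition spl1 (mu : mult_fun n) : mult_fun n * mult_fun n :=
  (mk n (fun p => if p %% 3 == 0 then vo mu p %/ 2 else vo mu (2 * p)), mk n (fun j => vo mu (3 * j) %% 2)).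
Definition mrg1 (x : mult_fun n * mult_fun n) : mult_fun n := mk n (MM (vo x.1) (vo x.2)).

Lemma spl_1 mu k : vo (spl1 mu).1 k = if k %% 3 == 0 then vo mu k %/ 2 else vo mu (2 * k).
Proof.
case: (leqP k n) => H.
- rewrite vo_mk //. case: ifP => _. exact: leq_trans (leq_div _ _) (vo_le _ _). exact: vo_le.
- rewrite vo_big //. case: ifP => _. by rewrite vo_big. rewrite vo_big //. lia.
Qed.
Lemma spl_2 mu k : vo (spl1 mu).2 k = vo mu (3 * k) %% 2.
Proof.
case: (leqP k n) => H.
- rewrite vo_mk //. exact: leq_trans (leq_mod _ _) (vo_le _ _).
- rewrite vo_big // vo_big //. lia.
Qed.

Lemma supp_le (m : mult_fun n) j c : 0 < vo m j -> vo m 0 = 0 -> c * sz n (vo m) <= n -> c * j <= n.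
Proof.
move=> Hp H0 Hs. case: (leqP j n) => Hj; last by rewrite vo_big in Hp.
have := mul_le_sz (vo m) (Ordinal (n:=n.+1) (m:=j) ltac:(lia)). rewrite /=. 
case: (posnP j) => Pj. subst j. lia. nia.
Qed.

Lemma mrg_vo (x : mult_fun n * mult_fun n) t : vo x.1 0 = 0 -> vo x.2 0 = 0 ->
  2 * sz n (vo x.1) + 3 * sz n (vo x.2) = n -> vo (mrg1 x) t = MM (vo x.1) (vo x.2) t.
Proof.
move=> H1 H2 Hs.
have S1 : forall j, n < 2 * j -> vo x.1 j = 0.
{ move=> j Hj. case: (posnP (vo x.1 j)) => // P. have := supp_le (c := 2) P H1 ltac:(lia). lia. }
have S2 : forall j, n < 3 * j -> vo x.2 j = 0.
{ move=> j Hj. case: (posnP (vo x.2 j)) => // P. have := supp_le (c := 3) P H2 ltac:(lia). lia. }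
case: (leqP t n) => Ht.
- rewrite vo_mk //. case: (posnP t) => [->|Pt]. by rewrite /MM /= H1 H2.
  have := le_sz (MM (vo x.1) (vo x.2)) (i := Ordinal (n:=n.+1) (m:=t) ltac:(lia)) Pt.
  rewrite MM_sz //=. lia.
- by rewrite vo_big // (MM_big S1 S2).
Qed.
End E.

Section F.
Variables n m1 m2 : nat.

Lemma spl_good (mu : mult_fun n) : vo mu 0 = 0 -> sz n (vo mu) = n ->
  (forall x : 'I_n.+1, (0 < mu x) ==> (x %% 6 \in [:: 0; 2; 3; 4])) ->
  let s := vo (spl1 mu).1 in let d := vo (spl1 mu).2 in
  [/\ forall j, n < 2 * j -> s j = 0, forall j, n < 3 * j -> d j = 0,
      forall t, MM s d t = vo mu t & 2 * sz n s + 3 * sz n d = n].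
Proof.
move=> H0 Hs Hr s d.
  have S1 : forall j, n < 2 * j -> s j = 0.
  { move=> j Hj. rewrite /s spl_1. case: ifP => _; last by rewrite vo_big.
    case: (leqP j n) => Hjn; last by rewrite vo_big.
    have := mul_le_sz (vo mu) (Ordinal (n:=n.+1) (m:=j) ltac:(lia)). rewrite /= Hs. nia. }
  have S2 : forall j, n < 3 * j -> d j = 0.
  { move=> j Hj. by rewrite /d spl_2 vo_big. }
  have PW : forall t, MM s d t = vo mu t.
  { move=> t. rewrite /MM /s /d !spl_1 spl_2. case: ifP => A.
    - have -> : 3 * (t %/ 3) = t by lia. rewrite A. lia.
    - case: ifP => B. have -> : ((t %/ 2) %% 3 == 0) = false by lia. have -> : 2 * (t %/ 2) = t by lia. by [].
      case: (leqP t n) => Ht; last by rewrite vo_big.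
      have := Hr (Ordinal (n:=n.+1) (m:=t) ltac:(lia)). rewrite -vo_ord /= !inE.
      case: (posnP (vo mu t)) => // P /=. lia. }
  have Hsz : 2 * sz n s + 3 * sz n d = n.
  { rewrite -(MM_sz S1 S2) -[RHS]Hs. apply: eq_bigr => i _. by rewrite PW. }
by split.
Qed.

Lemma B1_Pair : B1 m1 m2 n = #|PairSet n m1 m2|.
Proof.
apply: (card_bij (f := @spl1 n) (g := @mrg1 n)).
- move=> mu. rewrite inE => /and4P [Hp /forallP Hr /eqP Hw1 /eqP Hw2]. rewrite ispart_vo in Hp.
  case/andP: Hp => /eqP H0 /eqP Hs.
  set s := vo (spl1 mu).1. set d := vo (spl1 mu).2.
  have S1 : forall j, n < 2 * j -> s j = 0.
  { move=> j Hj. rewrite /s spl_1. case: ifP => _; last by rewrite vo_big.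
    case: (leqP j n) => Hjn; last by rewrite vo_big.
    have := mul_le_sz (vo mu) (Ordinal (n:=n.+1) (m:=j) ltac:(lia)). rewrite /= Hs. nia. }
  have S2 : forall j, n < 3 * j -> d j = 0.
  { move=> j Hj. by rewrite /d spl_2 vo_big. }
  have PW : forall t, MM s d t = vo mu t.
  { move=> t. rewrite /MM /s /d !spl_1 spl_2. case: ifP => A.
    - have -> : 3 * (t %/ 3) = t by lia. rewrite A. lia.
    - case: ifP => B. have -> : ((t %/ 2) %% 3 == 0) = false by lia. have -> : 2 * (t %/ 2) = t by lia. by [].
      case: (leqP t n) => Ht; last by rewrite vo_big.
      have := Hr (Ordinal (n:=n.+1) (m:=t) ltac:(lia)). rewrite -vo_ord /= !inE.
      case: (posnP (vo mu t)) => // P /=. lia. }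
  have Hsz : 2 * sz n s + 3 * sz n d = n.
  { rewrite -(MM_sz S1 S2) -[RHS]Hs. apply: eq_bigr => i _. by rewrite PW. }
  rewrite /PairSet inE /=. apply/and5P; split.
  + by rewrite /s /d spl_1 spl_2 /= H0.
  + apply/forallP => i. rewrite -vo_ord spl_2. lia.
  + by rewrite Hsz.
  + rewrite nparts_vo -/s -(@MM_w n s d S1 1) //. rewrite -Hw1 nparts_vo.
    apply/eqP. apply: eq_bigr => i _. by rewrite PW.
  + rewrite nparts_vo -/s -(@MM_w n s d S1 2) //. rewrite -Hw2 nparts_vo.
    apply/eqP. apply: eq_bigr => i _. by rewrite PW.
- case=> s0 D0. rewrite /PairSet inE /= => /and5P [/andP [/eqP H1 /eqP H2] /forallP HD /eqP Hs /eqP Hw1 /eqP Hw2].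
  have S1 : forall j, n < 2 * j -> vo s0 j = 0.
  { move=> j Hj. case: (posnP (vo s0 j)) => // P. have := supp_le (c := 2) P H1 ltac:(lia). lia. }
  have S2 : forall j, n < 3 * j -> vo D0 j = 0.
  { move=> j Hj. case: (posnP (vo D0 j)) => // P. have := supp_le (c := 3) P H2 ltac:(lia). lia. }
  have V : forall t, vo (mrg1 (s0, D0)) t = MM (vo s0) (vo D0) t by move=> t; rewrite mrg_vo.
  rewrite inE /B1_pred. apply/and4P; split.
  + rewrite ispart_vo V /MM /= div0n H1 H2 /=. rewrite (sz_agree (g := MM (vo s0) (vo D0))); last by move=> i; rewrite V.
    by rewrite (MM_sz S1 S2) Hs.
  + apply/forallP => i. rewrite -vo_ord V /MM. apply/implyP => P. rewrite !inE.
    case: ifP P => A P. lia. case: ifP P => B P. lia. by [].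
  + rewrite nparts_vo. under eq_bigr => i _ do rewrite V. rewrite (@MM_w n (vo s0) (vo D0) S1 1) //.
    by rewrite -Hw1 nparts_vo.
  + rewrite nparts_vo. under eq_bigr => i _ do rewrite V. rewrite (@MM_w n (vo s0) (vo D0) S1 2) //.
    by rewrite -Hw2 nparts_vo.
- move=> mu. rewrite inE => /and4P [Hp /forallP Hr _ _]. rewrite ispart_vo in Hp.
  case/andP: Hp => /eqP H0 /eqP Hs.
  have [S1 S2 PW Hsz] := spl_good H0 Hs Hr.
  apply: mf_eq => i. rewrite mrg_vo //.
  + by rewrite spl_1 /= H0.
  + by rewrite spl_2 /= H0.
- case=> s0 D0. rewrite /PairSet inE /= => /and5P [/andP [/eqP H1 /eqP H2] /forallP HD /eqP Hs _ _].
  have HD' : forall j, vo D0 j <= 1.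
  { move=> j. case: (leqP j n) => Hj; last by rewrite vo_big.
    have := HD (Ordinal (n:=n.+1) (m:=j) ltac:(lia)). by rewrite -vo_ord. }
  have V : forall t, vo (mrg1 (s0, D0)) t = MM (vo s0) (vo D0) t by move=> t; rewrite mrg_vo.
  congr (_, _); apply: mf_eq => k.
  + rewrite spl_1 !V /MM. case: ifP => A.
    * rewrite A. have := HD' (k %/ 3). lia.
    * have -> : (2 * k) %% 3 == 0 = false by lia. have -> : (2 * k) %% 2 == 0 by lia.
      by rewrite mulKn.
  + rewrite spl_2 V /MM. have -> : (3 * k) %% 3 == 0 by lia. rewrite mulKn //. have := HD' k. lia.
Qed.
End F.


Theorem theorem3p1 (n m1 m2 : nat) : B1 m1 m2 n = B2 m1 m2 n.
Proof.
by rewrite B1_Pair -Pair'_Pair -Mu_Pair' -B2_Mu.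
Qed.
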